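(* Let $\mathcal{P}\subseteq[0,1]^n$ be a polytope and let $\tilde F_1,\tilde F_2$ be two different open faces of $\mathcal{P}$. If $\tilde F_1$ and $\tilde F_2$ are both contained in $(0,1)^n$, then no Bernoulli factory for $\mathcal{P}$ exists.
   Context: A face of $\mathcal{P}$ is a set of the form $F=\arg\max_{p\in\mathcal{P}}w^Tp$ for some $w\in\mathbb{R}^n$; its dimension is that of its affine span. The open face $\tilde F$ corresponding to a face $F$ is the set of points of $F$ that belong to no face of $\mathcal{P}$ of lower dimension. A Bernoulli factory with output set $V$ (for inputs $x\in[0,1]^n$) is a (possibly infinite) rooted binary tree whose internal nodes are labeled by an index $i\in[n]$ or a known constant $c\in(0,1)$ and whose leaves are labeled by elements of $V$; on input $x$ one walks from the root, at a node labeled $i$ flipping a fresh independent coin that is $1$ with probability $x_i$, at a node labeled $c$ a fresh coin of bias $c$, following the edge labeled by the outcome, and outputs the label of the leaf reached. For a polytope $\mathcal{P}$ with vertex set $V$, a Bernoulli factory for $\mathcal{P}$ is such a factory with output set $V$ that terminates almost surely on $\mathcal{P}\cap(0,1)^n$ and satisfies $\mathbb{E}[\mathcal{F}(x)]=x$ for all $x\in\mathcal{P}\cap(0,1)^n$. *)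

(* Defs.v *)
From HB Require Import structures.
From mathcomp Require Import all_boot all_order all_algebra.
From mathcomp Require Import all_classical all_reals all_analysis.

Set Implicit Arguments.
Unset Strict Implicit.
Unset Printing Implicit Defensive.

Import Order.TTheory GRing.Theory Num.Theory.
Import numFieldNormedType.Exports.
Local Open Scope classical_set_scope.
Local Open Scope ring_scope.

Section Defs.
Variables (R : realType) (n : nat).

Definition dotp (w p : 'rV[R]_n) : R := \sum_(i < n) w 0 i * p 0 i.

Definition cube01 : set 'rV[R]_n := [set x | forall i, 0 <= x 0 i <= 1].
Definition cube01_open : set 'rV[R]_n := [set x | forall i, 0 < x 0 i < 1].

Definition convhull (S : seq 'rV[R]_n) : set 'rV[R]_n :=
  [set x | exists lam : 'I_(size S) -> R,
     (forall i, 0 <= lam i) /\ \sum_(i < size S) lam i = 1 /\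
     x = \sum_(i < size S) lam i *: S`_i].

Definition is_face (P F : set 'rV[R]_n) : Prop :=
  exists w : 'rV[R]_n,
    F = [set p | P p /\ forall q, P q -> dotp w q <= dotp w p].

Definition is_vertex (P : set 'rV[R]_n) (v : 'rV[R]_n) : Prop :=
  is_face P [set v].

Definition aff_indep (k : nat) (p : 'I_k.+1 -> 'rV[R]_n) : bool :=
  row_free (\matrix_(i < k) (p (lift ord0 i) - p ord0)).

Definition affdim (A : set 'rV[R]_n) (d : nat) : Prop :=
  (exists p : 'I_d.+1 -> 'rV[R]_n, (forall i, A (p i)) /\ aff_indep p) /\
  ~ (exists p : 'I_d.+2 -> 'rV[R]_n, (forall i, A (p i)) /\ aff_indep p).

Definition open_face (P F : set 'rV[R]_n) : set 'rV[R]_n :=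
  [set x | F x /\ forall G, is_face P G -> G x ->
     forall dG dF, affdim G dG -> affdim F dF -> ~ (dG < dF)%N].

Inductive node : Type :=
  | Coin of 'I_n
  | Const of R
  | Leaf of 'rV[R]_n.

(* A possibly infinite rooted binary tree is given by the labels of all
   positions, a position being the finite sequence of edge labels
   (coin outcomes, true = 1) from the root. Only positions all of whose
   proper prefixes are internal nodes belong to the tree. *)
Definition tree := seq bool -> node.

Definition internal (nd : node) : bool :=
  if nd is Leaf _ then false else true.

Definition in_tree (T : tree) (s : seq bool) : Prop :=
  forall k, (k < size s)%N -> internal (T (take k s)).

Definition step (x : 'rV[R]_n) (nd : node) (b : bool) : R :=
  match nd with
  | Coin i => if b then x 0 i else 1 - x 0 i
  | Const c => if b then c else 1 - c
  | Leaf _ => 0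
  end.

Definition pathprob (T : tree) (x : 'rV[R]_n) (s : seq bool) : R :=
  \prod_(k < size s) step x (T (take k s)) (nth false s k).

Definition is_leaf (T : tree) (s : seq bool) : bool :=
  [forall k : 'I_(size s), internal (T (take k s))] && ~~ internal (T s).

Definition term_prob (T : tree) (x : 'rV[R]_n) (K : nat) : R :=
  \sum_(m < K) \sum_(t : m.-tuple bool)
     (if is_leaf T t then pathprob T x t else 0).

Definition partial_mean (T : tree) (x : 'rV[R]_n) (i : 'I_n) (K : nat) : R :=
  \sum_(m < K) \sum_(t : m.-tuple bool)
     (if T t is Leaf v then
        (if is_leaf T t then pathprob T x t * v 0 i else 0) else 0).

Definition factory_with_outputs (V : 'rV[R]_n -> Prop) (T : tree) : Prop :=
  forall s, in_tree T s ->
    match T s with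
    | Const c => 0 < c < 1
    | Leaf v => V v
    | Coin _ => True
    end.

Definition bernoulli_factory_for (P : set 'rV[R]_n) (T : tree) : Prop :=
  factory_with_outputs (is_vertex P) T /\
  forall x, P x -> cube01_open x ->
    (term_prob T x K @[K --> \oo] --> (1 : R)) /\
    (forall i, partial_mean T x i K @[K --> \oo] --> x 0 i).

End Defs.

(* Main.v *)
Require Import Defs.
From HB Require Import structures.
From mathcomp Require Import all_boot all_order all_algebra.
From mathcomp Require Import all_classical all_reals all_analysis.
From mathcomp Require Import lra.
Set Implicit Arguments.
Unset Strict Implicit.
Unset Printing Implicit Defensive.
Import Order.TTheory GRing.Theory Num.Theory.
Import numFieldNormedType.Exports.
Local Open Scope classical_set_scope.
Local Open Scope ring_scope.

Section LA.
Variables (R : realType) (n : nat).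
Implicit Types (w p q : 'rV[R]_n) (A : set 'rV[R]_n).

Lemma dotpD w p q : dotp w (p + q) = dotp w p + dotp w q.
Proof. by rewrite /dotp -big_split; apply: eq_bigr => i _; rewrite mxE mulrDr. Qed.

Lemma dotpZ w a p : dotp w (a *: p) = a * dotp w p.
Proof. by rewrite /dotp mulr_sumr; apply: eq_bigr => i _; rewrite mxE mulrCA. Qed.

Lemma dotpN w p : dotp w (- p) = - dotp w p.
Proof. by rewrite -scaleN1r dotpZ mulN1r. Qed.

Lemma dotpB w p q : dotp w (p - q) = dotp w p - dotp w q.
Proof. by rewrite dotpD dotpN. Qed.

Lemma dotp0 w : dotp w 0 = 0.
Proof. by rewrite /dotp big1 // => i _; rewrite mxE mulr0. Qed.

Lemma dotp_sum w k (f : 'I_k -> 'rV[R]_n) :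
  dotp w (\sum_(i < k) f i) = \sum_(i < k) dotp w (f i).
Proof.
elim: k f => [|k IH] f; first by rewrite !big_ord0 dotp0.
by rewrite !big_ord_recr /= dotpD IH.
Qed.

Lemma dotpDl w1 w2 p : dotp (w1 + w2) p = dotp w1 p + dotp w2 p.
Proof. by rewrite /dotp -big_split; apply: eq_bigr => i _; rewrite mxE mulrDl. Qed.

Lemma aff_indepP k (p : 'I_k.+1 -> 'rV[R]_n) :
  aff_indep p <-> (forall c : 'I_k -> R,
     \sum_(i < k) c i *: (p (lift ord0 i) - p ord0) = 0 -> forall i, c i = 0).
Proof.
split.
- move=> hf c hc i.
  set M := \matrix_(i0 < k) (p (lift ord0 i0) - p ord0).
  have e : (\row_j c j) *m M = 0.
    rewrite mulmx_sum_row; rewrite -[RHS]hc; apply: eq_bigr => j _.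
    by rewrite rowK mxE.
  move/eqP: e; rewrite (mulmx_free_eq0 _ hf) => /eqP/rowP/(_ i).
  by rewrite !mxE.
- move=> h; apply: inj_row_free => v hv; apply/rowP => i; rewrite mxE.
  apply: (h (fun j => v 0 j)).
  rewrite -[RHS]hv mulmx_sum_row; apply: eq_bigr => j _; by rewrite rowK.
Qed.


Definition indepin (A : set 'rV[R]_n) k :=
  exists p : 'I_k.+1 -> 'rV[R]_n, (forall i, A (p i)) /\ aff_indep p.

Lemma indep_bound k (p : 'I_k.+1 -> 'rV[R]_n) : aff_indep p -> (k <= n)%N.
Proof. by rewrite /aff_indep -row_leq_rank => h; exact: leq_trans h (rank_leq_col _). Qed.

Lemma indep_down A k : indepin A k.+1 -> indepin A k.
Proof.
case=> p [hA hi]; exists (fun i : 'I_k.+1 => p (widen_ord (leqnSn _) i)).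
split => //; apply/aff_indepP => c hc i.
pose c' := fun j : 'I_k.+1 => if @insub nat (fun m => (m < k)%N) 'I_k (j : nat) is Some j' then c j' else 0.
have hc' := (aff_indepP p).1 hi c'.
have e1 : c' ord_max = 0 by rewrite /c' insubN //= ltnn.
have e2 : forall j : 'I_k, c' (widen_ord (leqnSn _) j) = c j.
  by move=> j; rewrite /c' /= valK.
have := hc' _ (widen_ord (leqnSn _) i); rewrite e2; apply.
rewrite big_ord_recr /= e1 scale0r addr0 -[RHS]hc; apply: eq_bigr => j _.
rewrite e2; congr (_ *: (p _ - p _)); exact: val_inj.
Qed.

Lemma indep_le A j k : indepin A k -> (j <= k)%N -> indepin A j.
Proof.
elim: k => [|k IH] h hjk; first by move: hjk; rewrite leqn0 => /eqP ->.
move: hjk; rewrite leq_eqVlt => /orP [/eqP -> //|]; rewrite ltnS.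
exact: IH (indep_down h).
Qed.

Lemma affdim_le A d j : affdim A d -> indepin A j -> (j <= d)%N.
Proof.
case=> _ hn hj; rewrite leqNgt; apply/negP => hdj; apply: hn.
exact: indep_le hj hdj.
Qed.

Lemma affdim_uniq A d1 d2 : affdim A d1 -> affdim A d2 -> d1 = d2.
Proof.
move=> h1 h2; apply/eqP; rewrite eqn_leq (affdim_le h2 h1.1) (affdim_le h1 h2.1) //.
Qed.

Lemma indep0 A a : A a -> indepin A 0.
Proof. by move=> ha; exists (fun _ => a); split => //; apply/aff_indepP => c _ []. Qed.

Lemma affdim_ex A a : A a -> exists d, affdim A d.
Proof.
move=> ha; apply: contrapT => hno.
have hall : forall k, indepin A k.
  elim=> [|k IH]; first exact: indep0 ha.
  apply: contrapT => hk; apply: hno; exists k; split => //.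
have [p [_ hp]] := hall n.+1.
by have := indep_bound hp; rewrite ltnn.
Qed.

Lemma indep_ext_gen k (p : 'I_k.+1 -> 'rV[R]_n) z w (f : 'I_k.+2 -> 'rV[R]_n) :
  aff_indep p -> (forall i, dotp w (p i) = dotp w (p ord0)) ->
  dotp w z != dotp w (p ord0) ->
  f ord0 = p ord0 ->
  (forall j : 'I_k, f (lift ord0 (widen_ord (leqnSn _) j)) = p (lift ord0 j)) ->
  f (lift ord0 ord_max) = z ->
  aff_indep f.
Proof.
move=> hi hw hz f0 fw fm; apply/aff_indepP => c hc.
rewrite big_ord_recr /= fm f0 in hc.
have ck : c ord_max = 0.
  move/(congr1 (dotp w)): hc; rewrite dotp0 dotpD dotp_sum big1; last first.
    by move=> j _; rewrite fw dotpZ dotpB hw subrr mulr0.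
  rewrite add0r dotpZ dotpB => /eqP; rewrite mulf_eq0 subr_eq0 (negbTE hz) orbF.
  by move/eqP.
rewrite ck scale0r addr0 in hc.
have hp := (aff_indepP p).1 hi (fun j => c (widen_ord (leqnSn _) j)).
move=> i; have [lt|] := ltnP i k.
  have -> : i = widen_ord (leqnSn _) (Ordinal lt) by apply: val_inj.
  apply: hp; rewrite -[RHS]hc; apply: eq_bigr => j _; by rewrite fw.
move=> hki; have -> // : i = ord_max.
by apply: val_inj => /=; apply/eqP; rewrite eqn_leq hki -ltnS ltn_ord.
Qed.

Lemma indep_ext k (p : 'I_k.+1 -> 'rV[R]_n) z w :
  aff_indep p -> (forall i, dotp w (p i) = dotp w (p ord0)) ->
  dotp w z != dotp w (p ord0) ->
  aff_indep (fun i : 'I_k.+2 => if (i : nat) == k.+1 then z else p (inord i)).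
Proof.
move=> hi hw hz; apply: (indep_ext_gen hi hw hz).
- by rewrite /=; congr p; apply: val_inj; rewrite /= inordK.
- move=> j; rewrite /= /bump /= add1n eqSS ifN ?neq_ltn ?ltn_ord //.
  congr p; apply: val_inj; rewrite /= inordK; first by rewrite /bump leq0n add1n.
  by rewrite ltnS ltn_ord.
- by rewrite /= /bump /= add1n eqxx.
Qed.


Lemma avg_eq k (mu a : 'I_k -> R) M :
  (forall i, 0 < mu i) -> \sum_i mu i = 1 -> (forall i, a i <= M) ->
  \sum_i mu i * a i = M -> forall i, a i = M.
Proof.
move=> hmu hs ha he i.
have h0 : \sum_i mu i * (M - a i) = 0.
  under eq_bigr do rewrite mulrBr.
  by rewrite sumrB -mulr_suml hs mul1r he subrr.
have hge : forall j, predT j -> 0 <= mu j * (M - a j).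
  by move=> j _; apply: mulr_ge0; [exact: ltW | rewrite subr_ge0].
have := @psumr_eq0P _ _ predT (fun i => mu i * (M - a i)) hge h0 i isT.
by move=> /eqP; rewrite mulf_eq0 subr_eq0 (gt_eqF (hmu i)) /= => /eqP ->.
Qed.

Variable S : seq 'rV[R]_n.
Notation P := (convhull S).

Lemma convhull_comb k (mu : 'I_k -> R) (q : 'I_k -> 'rV[R]_n) :
  (forall i, 0 <= mu i) -> \sum_i mu i = 1 -> (forall i, P (q i)) ->
  P (\sum_i mu i *: q i).
Proof.
move=> hmu hs hq.
have /choice [L hL] := hq.
exists (fun j => \sum_i mu i * L i j); split; [|split].
- by move=> j; apply: sumr_ge0 => i _; rewrite mulr_ge0 // (hL i).1.
- rewrite exchange_big /=; under eq_bigr do rewrite -mulr_sumr (hL _).2.1 mulr1.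
  exact: hs.
- rewrite [RHS](eq_bigr (fun j => \sum_i (mu i * L i j) *: S`_j)); last first.
    by move=> j _; rewrite scaler_suml.
  rewrite exchange_big /=; apply: eq_bigr => i _.
  by rewrite (hL i).2.2 scaler_sumr; apply: eq_bigr => j _; rewrite scalerA.
Qed.

Lemma dotp_comb w k (mu : 'I_k -> R) (q : 'I_k -> 'rV[R]_n) :
  dotp w (\sum_i mu i *: q i) = \sum_i mu i * dotp w (q i).
Proof. by rewrite dotp_sum; apply: eq_bigr => i _; rewrite dotpZ. Qed.

Lemma argmax_ord k (f : 'I_k.+1 -> R) : exists j, forall i, f i <= f j.
Proof.
elim: k f => [|k IH] f; first by exists ord0 => i; rewrite (ord1 i).
have [j hj] := IH (fun i => f (widen_ord (leqnSn _) i)).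
have [le|lt] := leP (f ord_max) (f (widen_ord (leqnSn _) j)).
  exists (widen_ord (leqnSn _) j) => i; have [lt|] := ltnP i k.+1.
    by have -> : i = widen_ord (leqnSn _) (Ordinal lt) by apply: val_inj.
  move=> hki; have -> // : i = ord_max.
  by apply: val_inj => /=; apply/eqP; rewrite eqn_leq hki -ltnS ltn_ord.
exists ord_max => i; have [lt'|] := ltnP i k.+1.
  have -> : i = widen_ord (leqnSn _) (Ordinal lt') by apply: val_inj.
  exact: le_trans (hj _) (ltW lt).
move=> hki; have -> // : i = ord_max.
by apply: val_inj => /=; apply/eqP; rewrite eqn_leq hki -ltnS ltn_ord.
Qed.

Lemma face_nonempty F x : P x -> is_face P F -> exists y, F y.
Proof.
move=> [lam [hl0 [hl1 hx]]] [w ->].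
case hS: (size S) lam hl0 hl1 hx => [|k] lam hl0 hl1 hx.
  by move: hl1; rewrite big_ord0 => /eqP; rewrite eq_sym oner_eq0.
have [j hj] := argmax_ord (fun i : 'I_k.+1 => dotp w S`_i).
have hmax : forall q, P q -> dotp w q <= dotp w S`_j.
  move=> q [l [hl0' [hl1' ->]]]; rewrite dotp_comb.
  rewrite (@le_trans _ _ (\sum_i l i * dotp w S`_j)) //.
    apply: ler_sum => i _; rewrite ler_wpM2l //.
    move: (i) (l) hl0' hl1'; rewrite hS => i' _ _ _; exact: hj.
  by rewrite -mulr_suml hl1' mul1r.
exists S`_j; split => //.
have hj' : (j < size S)%N by rewrite hS.
exists (fun i => ((i : nat) == j)%:R); split; [|split].
- by move=> i; rewrite ler0n.
- rewrite (bigD1 (Ordinal hj')) //= eqxx big1 ?addr0 // => i /negbTE ne.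
  by rewrite -(inj_eq val_inj) /= in ne; rewrite ne.
- rewrite (bigD1 (Ordinal hj')) //= eqxx scale1r big1 ?addr0 // => i /negbTE ne.
  by rewrite -(inj_eq val_inj) /= in ne; rewrite ne scale0r.
Qed.


Lemma face_inter F1 F2 x : is_face P F1 -> is_face P F2 -> F1 x -> F2 x ->
  is_face P (F1 `&` F2).
Proof.
move=> [w1 e1] [w2 e2]; rewrite e1 e2 => -[Px h1] [_ h2].
exists (w1 + w2); apply/seteqP; split => p /=.
  move=> [[Pp g1] [_ g2]]; split => // q Pq; rewrite !dotpDl.
  by apply: lerD; [apply: g1 | apply: g2].
move=> [Pp g]; have := g x Px; rewrite !dotpDl => hs.
have a1 := h1 p Pp; have a2 := h2 p Pp.
have b1 : dotp w1 p = dotp w1 x.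
  by apply/eqP; rewrite eq_le a1 /=; lra.
have b2 : dotp w2 p = dotp w2 x.
  by apply/eqP; rewrite eq_le a2 /=; lra.
split; split => // q Pq; [rewrite b1; exact: h1 | rewrite b2; exact: h2].
Qed.

Lemma open_face_nonempty F x : P x -> is_face P F -> exists b, open_face P F b.
Proof.
move=> Px hF; have [y Fy] := face_nonempty Px hF.
have [d hd] := affdim_ex Fy.
have [p [pF pi]] := hd.1.
move: (hF) => [w ew].
pose mu := fun _ : 'I_d.+1 => (d.+1%:R : R)^-1.
have mu0 : forall i, 0 < mu i by move=> i; rewrite invr_gt0 ltr0n.
have mu1 : \sum_i mu i = 1.
  by rewrite sumr_const card_ord -[_ *+ _]mulr_natr mulVf // pnatr_eq0.
pose b := \sum_i mu i *: p i.
have hpF : forall i, P (p i) /\ forall q, P q -> dotp w q <= dotp w (p i).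
  by move=> i; have := pF i; rewrite ew.
have Pb : P b by apply: convhull_comb => // i; [exact: ltW | exact: (hpF i).1].
exists b; split.
  rewrite ew; split => // q Pq; rewrite /b dotp_comb.
  rewrite -[dotp w q]mul1r -mu1 mulr_suml; apply: ler_sum => i _.
  by rewrite ler_wpM2l ?(ltW (mu0 i)) // (hpF i).2.
move=> G [wG eG] Gb dG dF hdG hdF.
rewrite -(affdim_uniq hd hdF); apply/negP; rewrite -leqNgt; apply: (affdim_le hdG).
exists p; split => // i.
move: Gb; rewrite eG => -[_ hb]; split; first exact: (hpF i).1.
have := @avg_eq _ mu (fun i => dotp wG (p i)) (dotp wG b) mu0 mu1.
move=> /(_ (fun j => hb _ (hpF j).1)) /(_ _) e.
by move=> q Pq; rewrite e ?hb // /b dotp_comb.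
Qed.

Lemma face_sub F1 F2 x : is_face P F1 -> is_face P F2 ->
  open_face P F1 x -> F2 x -> F1 `<=` F2.
Proof.
move=> hF1 hF2 [F1x ho] F2x z F1z; apply: contrapT => nF2z.
have hG := face_inter hF1 hF2 F1x F2x.
have [dG hdG] := affdim_ex (conj F1x F2x : (F1 `&` F2) x).
have [dF hdF] := affdim_ex F1x.
have := ho _ hG (conj F1x F2x) dG dF hdG hdF; apply.
have [p [pG pi]] := hdG.1.
move: (hF1) (hF2) => [w1 e1] [w2 e2].
have p2 : forall i, P (p i) /\ forall q, P q -> dotp w2 q <= dotp w2 (p i).
  by move=> i; have := (pG i).2; rewrite e2.
have Pz : P z by move: F1z; rewrite e1 => -[].
apply: (affdim_le hdF); exists (fun i : 'I_dG.+2 => if (i : nat) == dG.+1 then z else p (inord i)).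
split.
  by move=> i; case: ifP => _ //; exact: (pG _).1.
apply: indep_ext => //.
  move=> i; apply/eqP; rewrite eq_le; apply/andP; split; [apply: (p2 ord0).2; exact: (p2 i).1 | apply: (p2 i).2; exact: (p2 ord0).1].
apply/eqP => ez; apply: nF2z; rewrite e2; split => // q Pq.
by rewrite ez; exact: (p2 _).2.
Qed.

End LA.
Lemma lim_uniq (R : realType) (u : nat -> R) (a b : R) :
  u K @[K --> \oo] --> a -> u K @[K --> \oo] --> b -> a = b.
Proof. move=> ha hb; have := cvg_lim _ ha. move=> <-. rewrite (cvg_lim _ hb) //. exact: norm_hausdorff. Qed.

Lemma cvg_sumI (R : realType) k (f : 'I_k -> nat -> R) (l : 'I_k -> R) :
  (forall i, f i K @[K --> \oo] --> l i) ->
  \sum_(i < k) f i K @[K --> \oo] --> \sum_(i < k) l i.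
Proof.
elim: k f l => [|k IH] f l h.
  rewrite big_ord0; under eq_fun do rewrite big_ord0; exact: cvg_cst.
rewrite big_ord_recr /=; under eq_fun do rewrite big_ord_recr /=.
apply: cvgD; last exact: h.
exact: (IH (fun i => f (widen_ord (leqnSn _) i))).
Qed.

Section Prob.
Variables (R : realType) (n : nat) (S : seq 'rV[R]_n) (T : tree R n).
Notation P := (convhull S).

Definition lbl (t : seq bool) : 'rV[R]_n := if T t is Leaf v then v else 0.

Definition gt (w : 'rV[R]_n) (M : R) (z : 'rV[R]_n) (t : seq bool) : R :=
  if is_leaf T t then pathprob T z t * (M - dotp w (lbl t)) else 0.

Definition aK w M z K := \sum_(m < K) \sum_(t : m.-tuple bool) gt w M z t.

Lemma aK_eq w M z K :
  aK w M z K = M * term_prob T z K - \sum_(i < n) w 0 i * partial_mean T z i K.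
Proof.
rewrite /aK /term_prob /partial_mean.
have -> : \sum_(i < n) w 0 i * (\sum_(m < K) \sum_(t : m.-tuple bool)
     (if T t is Leaf v then (if is_leaf T t then pathprob T z t * v 0 i else 0) else 0))
   = \sum_(m < K) \sum_(t : m.-tuple bool) \sum_(i < n) w 0 i *
     (if T t is Leaf v then (if is_leaf T t then pathprob T z t * v 0 i else 0) else 0).
  under eq_bigr do rewrite mulr_sumr.
  rewrite exchange_big /=; apply: eq_bigr => m _.
  under eq_bigr do rewrite mulr_sumr.
  by rewrite exchange_big.
rewrite mulr_sumr -sumrB; apply: eq_bigr => m _.
rewrite mulr_sumr -sumrB; apply: eq_bigr => t _.
rewrite /gt /lbl; case: ifP => hl.
  move: (hl) => /andP [_]; case: (T t) => [i|c|v] //= _.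
  rewrite /dotp mulrBr mulrC; congr (_ - _).
  by rewrite mulr_sumr; apply: eq_bigr => i _; rewrite mulrCA.
case: (T t) => [i|c|v] /=; rewrite ?hl big1 ?mulr0 ?subr0 // => *; exact: mulr0.
Qed.


Lemma leaf_in_tree t : is_leaf T t -> in_tree T t.
Proof. by move=> /andP [/forallP h _] k hk; exact: (h (Ordinal hk)). Qed.


Lemma pathprob_gt0 V z t : factory_with_outputs V T -> cube01_open z ->
  is_leaf T t -> 0 < pathprob T z t.
Proof.
move=> hf hz hl; move: (hl) => /andP [/forallP hint _].
rewrite /pathprob; apply: prodr_gt0 => k _.
have hk := hint k.
have hin : in_tree T (take k t).
  move=> k' hk'; have e : size (take k t) = k by rewrite size_takel // ltnW.
  rewrite e in hk'; rewrite take_takel; last exact: ltnW.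
  exact: (hint (Ordinal (ltn_trans hk' (ltn_ord k)))).
have := hf _ hin; move: hk.
case: (T (take k t)) => [i|c|v] //= _.
  move=> _; have /andP [h1 h2] := hz i.
  by case: (nth false t k); rewrite // subr_gt0.
by move=> /andP [h1 h2]; case: (nth false t k); rewrite // subr_gt0.
Qed.

Lemma leaf_lbl_P t : factory_with_outputs (is_vertex P) T -> is_leaf T t -> P (lbl t).
Proof.
move=> hf hl; have := hf _ (leaf_in_tree hl); rewrite /lbl.
move: hl => /andP [_]; case: (T t) => [i|c|v] //= _ [w e].
by have : [set v] v by []; rewrite e => -[].
Qed.


Lemma aK_S w M z K :
  aK w M z K.+1 = aK w M z K + \sum_(t : K.-tuple bool) gt w M z t.
Proof. by rewrite /aK big_ord_recr. Qed.

Lemma aK_cvg w M z : bernoulli_factory_for P T -> P z -> cube01_open z ->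
  aK w M z K @[K --> \oo] --> M - dotp w z.
Proof.
move=> [hf hc] Pz hz.
have -> : M - dotp w z = M * 1 - \sum_(i < n) w 0 i * z 0 i by rewrite mulr1.
under eq_cvg do rewrite aK_eq.
apply: cvgB; first by apply: cvgMl_tmp; exact: (hc z Pz hz).1.
apply: cvg_sumI => i; apply: cvgMl_tmp; exact: (hc z Pz hz).2 i.
Qed.

Lemma leaves_on_face w x : bernoulli_factory_for P T -> P x -> cube01_open x ->
  (forall q, P q -> dotp w q <= dotp w x) ->
  forall t, is_leaf T t -> dotp w (lbl t) = dotp w x.
Proof.
move=> hb Px hx hmax; move: (hb) => [hf hc].
set M := dotp w x.
have g0 : forall t, 0 <= gt w M x t.
  move=> t; rewrite /gt; case: ifP => hl //; apply: mulr_ge0.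
    exact: ltW (pathprob_gt0 hf hx hl).
  rewrite subr_ge0; exact: hmax _ (leaf_lbl_P hf hl).
have cv : aK w M x K @[K --> \oo] --> 0.
  by have := aK_cvg (w:=w) (M:=M) hb Px hx; rewrite subrr.
have mono : nondecreasing_seq (aK w M x).
  apply/nondecreasing_seqP => K; rewrite aK_S lerDl.
  by apply: sumr_ge0 => t _; exact: g0.
have a0 : forall K, aK w M x K = 0.
  move=> K; apply/eqP; rewrite eq_le; apply/andP; split.
    have := nondecreasing_cvgn_le mono (cvgP _ cv) K.
    by rewrite (cvg_lim (@norm_hausdorff _ _) cv).
  by rewrite /aK; apply: sumr_ge0 => m _; apply: sumr_ge0 => t _; exact: g0.
move=> t hl.
have hs : \sum_(t' : (size t).-tuple bool) gt w M x t' = 0.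
  by have := a0 (size t).+1; rewrite aK_S a0 add0r.
have := @psumr_eq0P _ _ predT _ (fun t' _ => g0 (tval t')) hs (in_tuple t) isT.
rewrite /gt /= hl => /eqP; rewrite mulf_eq0 (gt_eqF (pathprob_gt0 hf hx hl)) /=.
by rewrite subr_eq0 => /eqP <-.
Qed.

Lemma point_on_face w M z : bernoulli_factory_for P T ->
  (forall t, is_leaf T t -> dotp w (lbl t) = M) -> P z -> cube01_open z ->
  dotp w z = M.
Proof.
move=> hb hl Pz hz.
have a0 : forall K, aK w M z K = 0.
  move=> K; rewrite /aK big1 // => m _; rewrite big1 // => t _.
  by rewrite /gt; case: ifP => // h; rewrite hl // subrr mulr0.
have := aK_cvg (w:=w) (M:=M) hb Pz hz.
under eq_cvg do rewrite a0.
move=> h; have e : M - dotp w z = 0 by apply: lim_uniq h _; exact: cvg_cst.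
by apply/eqP; rewrite eq_sym -subr_eq0 e.
Qed.

End Prob.

Unset Implicit Arguments.

Theorem lemmaB5 (R : realType) (n : nat) (S : seq 'rV[R]_n)
    (F1 F2 : set 'rV[R]_n) :
  convhull S `<=` (@cube01 R n) ->
  is_face (convhull S) F1 -> is_face (convhull S) F2 ->
  open_face (convhull S) F1 <> open_face (convhull S) F2 ->
  open_face (convhull S) F1 `<=` (@cube01_open R n) ->
  open_face (convhull S) F2 `<=` (@cube01_open R n) ->
  ~ (exists T : tree R n, bernoulli_factory_for (convhull S) T).
Proof.
move=> _ hF1 hF2 hne ho1 ho2 [T hb].
case: (pselect (exists x, convhull S x)) => [[x0 Px0]|nP]; last first.
  apply: hne; apply/seteqP; split => z [Fz _]; exfalso; apply: nP; exists z.
    by move: hF1 Fz => [w ->] [].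
  by move: hF2 Fz => [w ->] [].
have [x ox] := open_face_nonempty Px0 hF1.
have [y oy] := open_face_nonempty Px0 hF2.
move: (hF1) (hF2) => [w1 e1] [w2 e2].
have hx := ho1 x ox; have hy := ho2 y oy.
have [Px hx1] : convhull S x /\ forall q, convhull S q -> dotp w1 q <= dotp w1 x.
  by move: ox.1; rewrite e1.
have [Py hy2] : convhull S y /\ forall q, convhull S q -> dotp w2 q <= dotp w2 y.
  by move: oy.1; rewrite e2.
have F1y : F1 y.
  rewrite e1; split => // q Pq.
  rewrite (point_on_face hb (leaves_on_face hb Px hx hx1) Py hy); exact: hx1.
have F2x : F2 x.
  rewrite e2; split => // q Pq.
  rewrite (point_on_face hb (leaves_on_face hb Py hy hy2) Px hx); exact: hy2.
have s12 := face_sub hF1 hF2 ox F2x.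
have s21 := face_sub hF2 hF1 oy F1y.
apply: hne; have -> // : F1 = F2 by apply/seteqP; split.
Qed.
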